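(* Let $\gamma>0$, $\gamma\neq1$. Then $N^{\rm alg}_{\mathbb{R}}(r)=c_\gamma\,r/\pi+O(1)$ as $r\to\infty$ for a constant $c_\gamma\le 1+\gamma$, and $c_\gamma=1+\gamma$ if and only if $\gamma$ or $1/\gamma$ is an integer.
   Context: Half-line problem: for $\lambda\neq0$, find $(u,v)$ on $[0,1]$ with $-u''-\lambda^2u=0$, $-v''-\lambda^2\gamma^2v=0$, $u(0)=v(0)=0$, $u(1)=v(1)$, $u'(1)=v'(1)$; $\lambda$ is an ITE if a nontrivial pair exists. ITEs are the nonzero zeros of $F(\lambda)=\gamma\sin\lambda\cos(\gamma\lambda)-\sin(\gamma\lambda)\cos\lambda$; the algebraic multiplicity of an ITE is its order as a zero of $F$. $N^{\rm alg}_{\mathbb{R}}(r)$ is the number of real ITEs in $(0,r]$ counted with algebraic multiplicity. *)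

(* Defs.v *)
From Stdlib Require Import Reals Lra Lia List.
Open Scope R_scope.

(* The characteristic function F(lambda) = gamma sin(lambda) cos(gamma lambda)
   - sin(gamma lambda) cos(lambda); ITEs are its nonzero zeros. *)
Definition F_ITE (gamma : R) (lam : R) : R :=
  gamma * sin lam * cos (gamma * lam) - sin (gamma * lam) * cos lam.

Inductive nderiv : nat -> (R -> R) -> (R -> R) -> Prop :=
| nderiv_0 : forall f, nderiv 0 f f
| nderiv_S : forall k f g h,
    nderiv k f g -> (forall x, derivable_pt_lim g x (h x)) -> nderiv (S k) f h.

Definition zero_order (f : R -> R) (x : R) (k : nat) : Prop :=
  (forall j g, (j < k)%nat -> nderiv j f g -> g x = 0) /\
  (exists g, nderiv k f g /\ g x <> 0).

(* ITE_count gamma r n : N^alg_R(r) = n, i.e. the real ITEs in (0, r]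
   are finitely many, listed without repetition by l, and the sum of their
   algebraic multiplicities (orders as zeros of F) is n. *)
Definition ITE_count (gamma r : R) (n : nat) : Prop :=
  exists (l : list R) (ks : list nat),
    NoDup l /\
    (forall x, In x l <-> (0 < x <= r /\ F_ITE gamma x = 0)) /\
    Forall2 (fun x k => zero_order (F_ITE gamma) x k) l ks /\
    n = list_sum ks.

(* Main.v *)
Require Import Defs.
From Stdlib Require Import Reals Lra Lia List FunctionalExtensionality ZArith Classical Permutation.
From Coquelicot Require Import Coquelicot.
Open Scope R_scope.

Lemma nderiv_uniq k f g1 g2 : nderiv k f g1 -> nderiv k f g2 -> forall x, g1 x = g2 x.
Proof.
  revert g1 g2. induction k; intros g1 g2 h1 h2.
  - inversion h1; inversion h2; subst; auto.
  - inversion h1; subst. inversion h2; subst.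
    assert (g = g0) by (apply functional_extensionality; eapply IHk; eauto). subst.
    intros x. eapply uniqueness_limite; eauto.
Qed.

Section S.
Variable gm : R.
Definition F1 x := (1 - gm^2) * (sin x * sin (gm*x)).
Definition F2 x := (1 - gm^2) * (cos x * sin (gm*x) + gm * (sin x * cos (gm*x))).
Definition F3 x := (1 - gm^2) * (2*gm * (cos x * cos (gm*x)) - (1+gm^2) * (sin x * sin (gm*x))).
End S.

Lemma dF0 gm x : derivable_pt_lim (F_ITE gm) x (F1 gm x).
Proof. apply is_derive_Reals. unfold F_ITE, F1. auto_derive; auto. ring. Qed.
Lemma dF1 gm x : derivable_pt_lim (F1 gm) x (F2 gm x).
Proof. apply is_derive_Reals. unfold F2, F1. auto_derive; auto. ring. Qed.
Lemma dF2 gm x : derivable_pt_lim (F2 gm) x (F3 gm x).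
Proof. apply is_derive_Reals. unfold F2, F3. auto_derive; auto. ring. Qed.

Lemma nd1 gm : nderiv 1 (F_ITE gm) (F1 gm).
Proof. econstructor. constructor. apply dF0. Qed.
Lemma nd2 gm : nderiv 2 (F_ITE gm) (F2 gm).
Proof. econstructor. apply nd1. apply dF1. Qed.
Lemma nd3 gm : nderiv 3 (F_ITE gm) (F3 gm).
Proof. econstructor. apply nd2. apply dF2. Qed.

Lemma order1 gm x : F_ITE gm x = 0 -> F1 gm x <> 0 -> zero_order (F_ITE gm) x 1.
Proof.
  intros h0 h1. split.
  - intros j g hj hd. assert (j = 0%nat) by lia. subst. inversion hd; subst; auto.
  - exists (F1 gm). split; auto. apply nd1.
Qed.

Lemma order3 gm x : F_ITE gm x = 0 -> F1 gm x = 0 -> F2 gm x = 0 -> F3 gm x <> 0 ->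
  zero_order (F_ITE gm) x 3.
Proof.
  intros h0 h1 h2 h3. split.
  - intros j g hj hd. destruct j as [|[|[|j]]]; try lia.
    + inversion hd; subst; auto.
    + rewrite (nderiv_uniq _ _ _ _ hd (nd1 gm)). auto.
    + rewrite (nderiv_uniq _ _ _ _ hd (nd2 gm)). auto.
  - exists (F3 gm). split; auto. apply nd3.
Qed.
Definition den (g x : R) := g * cos x ^ 2 + sin x ^ 2.
Definition qf (g x : R) := (1 - g) * sin x * cos x / den g x.
Definition gg (g l : R) := g * l + atan (qf g (g * l)) - l.

Lemma den_pos g x : 0 < g -> 0 < den g x.
Proof.
  intros hg. unfold den. pose proof (sin2_cos2 x). unfold Rsqr in H.
  destruct (Req_dec (cos x) 0) as [h|h].
  - rewrite h in *. nra.
  - assert (0 < cos x ^2) by (simpl; rewrite Rmult_1_r; apply Rsqr_pos_lt; auto). nra.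
Qed.

Lemma cos_atan_pos y : 0 < cos (atan y).
Proof. apply cos_gt_0; pose proof (atan_bound y); lra. Qed.

Lemma sin_atan_eq y : sin (atan y) = y * cos (atan y).
Proof.
  pose proof (tan_atan y). unfold tan in H. pose proof (cos_atan_pos y).
  rewrite <- H at 2. field. lra.
Qed.

Lemma sin_gg g l : 0 < g ->
  sin (gg g l) = - cos (atan (qf g (g*l))) * F_ITE g l / den g (g*l).
Proof.
  intros hg. unfold gg.
  replace (g * l + atan (qf g (g * l)) - l) with ((g*l - l) + atan (qf g (g*l))) by ring.
  rewrite sin_plus, sin_atan_eq, sin_minus, cos_minus.
  pose proof (den_pos g (g*l) hg).
  unfold F_ITE, qf in *.
  set (ca := cos (atan _)).
  pose proof (sin2_cos2 (g*l)). unfold Rsqr in H0.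
  unfold den in *.
  field_simplify; [|lra|lra].
  set (s := sin (g*l)) in *. set (c := cos (g*l)) in *.
  replace (s^2) with (1 - c^2) in * by nra.
  ring_simplify. 
  replace (s^3) with (s*(1-c^2)) by (replace (1 - c^2) with (s*s) by (simpl;lra); ring). field. lra.
Qed.

Lemma deriv_alg (g s c : R) (hg : 0 < g) (H0 : s*s + c*c = 1) (H : 0 < g * c ^ 2 + s ^ 2) (H2 : 0 < g^2 * c ^ 2 + s ^ 2) : 
g * 1 +
  (((1 - g) * (g * 1 * c) * c +
    (1 - g) * s * (g * 1 * - s)) *
   /
   (g * (c * (c * 1)) + s * (s * 1)) +
   (1 - g) * s * c *
   (-
    (g * (g * 1 * - s * ((1 + 1) * (c * 1))) +
     g * 1 * c * ((1 + 1) * (s * 1))) *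
    /
    ((g * (c * (c * 1)) + s * (s * 1)) *
     (g * (c * (c * 1)) + s * (s * 1))))) *
  /
  (1 +
   (1 - g) * s * c *
   /
   (g * (c * (c * 1)) + s * (s * 1)) *
   ((1 - g) * s * c *
    /
    (g * (c * (c * 1)) + s * (s * 1)) *
    1)) +
  - (1) =
  (g ^ 2 - 1) * s ^ 2 / (g ^ 2 * c ^ 2 + s ^ 2).
Proof.
  assert (E: (g * c ^ 2 + s ^ 2)^2 + ((1-g)*s*c)^2 = (g^2 * c ^ 2 + s ^ 2) * (s*s+c*c)) by ring.
  rewrite H0, Rmult_1_r in E.
  field_simplify; try (split; nra); try nra.
  match goal with |- ?a / ?b = _ => replace a with ((g^2*s^2 - s^2)*(s*s+c*c)) by ring;
     replace b with ((g^2*c^2+s^2)*(s*s+c*c)) by ring end.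
  rewrite H0, !Rmult_1_r. reflexivity.
Qed.

Definition dgg (g l : R) := (g^2 - 1) * sin (g*l) ^ 2 / (g^2 * cos (g*l) ^2 + sin (g*l)^2).

Lemma gg_deriv g l : 0 < g -> is_derive (gg g) l (dgg g l).
Proof.
  intros hg. unfold dgg, gg, qf, den.
  pose proof (den_pos g (g*l) hg). unfold den in H.
  assert (H2 : 0 < g^2 * cos (g*l) ^ 2 + sin (g*l) ^ 2) by (apply den_pos; nra).
  pose proof (sin2_cos2 (g*l)). unfold Rsqr in H0.
  auto_derive.
  - lra.
  - apply deriv_alg; auto.
Qed.

Lemma nondecr (G dG : R -> R) a b : (forall x, is_derive G x (dG x)) -> (forall x, 0 <= dG x) ->
  a <= b -> G a <= G b.
Proof.
  intros hd hp hab. destruct (Req_dec a b) as [->|hne]; [lra|].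
  destruct (MVT_gen G a b dG) as [c [_ hc]].
  - intros; apply hd.
  - intros. apply derivable_continuous_pt. exists (dG x). apply is_derive_Reals, hd.
  - specialize (hp c). assert (0 <= dG c * (b - a)) by nra. lra.
Qed.

Lemma strict_incr (G dG : R -> R) :
  (forall x, is_derive G x (dG x)) -> (forall x, 0 <= dG x) ->
  (forall u v, u < v -> exists w z, u <= w < z /\ z <= v /\ forall x, w < x < z -> 0 < dG x) ->
  forall a b, a < b -> G a < G b.
Proof.
  intros hd hp hs a b hab. destruct (hs a b hab) as [w [z [h1 [h2 h3]]]].
  set (x := w + (z - w)/3). set (y := w + 2*(z-w)/3).
  assert (G x < G y).
  { apply (incr_function G w z dG); simpl; try (unfold x, y; lra).
    - intros; apply hd.
    - intros t ht1 ht2. apply h3. simpl in *; lra. }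
  pose proof (nondecr G dG a x hd hp ltac:(unfold x; lra)).
  pose proof (nondecr G dG y b hd hp ltac:(unfold y; lra)). lra.
Qed.

Lemma sin_nz_between (y : R) (n : Z) : IZR n * PI < y < (IZR n + 1) * PI -> sin y <> 0.
Proof.
  intros [h1 h2] hs. destruct (sin_eq_0_0 _ hs) as [k ->].
  pose proof PI_RGT_0.
  assert (IZR n < IZR k) by (apply (Rmult_lt_reg_r PI); lra).
  assert (IZR k < IZR n + 1) by (apply (Rmult_lt_reg_r PI); lra).
  apply lt_IZR in H0. rewrite <- plus_IZR in H1. apply lt_IZR in H1. lia.
Qed.

Lemma sin_nz_between_nat (y : R) (n : nat) : INR n * PI < y < (INR n + 1) * PI -> sin y <> 0.
Proof. rewrite INR_IZR_INZ. apply sin_nz_between. Qed.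

Lemma floor_nat (p y : R) : 0 < p -> 0 <= y -> exists N : nat, INR N * p <= y < (INR N + 1) * p.
Proof.
  intros hp hy. pose proof (base_Int_part (y/p)) as [h1 h2].
  set (z := Int_part (y/p)) in *.
  assert (0 <= y/p) by (apply Rdiv_le_0_compat; lra).
  assert (-1 < z)%Z by (apply lt_IZR; simpl; lra).
  exists (Z.to_nat z). rewrite INR_IZR_INZ, Z2Nat.id by lia.
  split.
  - apply (Rmult_le_reg_r (/p)). apply Rinv_0_lt_compat; lra.
    rewrite Rmult_assoc, Rinv_r by lra. unfold Rdiv in h1. lra.
  - apply (Rmult_lt_reg_r (/p)). apply Rinv_0_lt_compat; lra.
    rewrite Rmult_assoc, Rinv_r by lra. unfold Rdiv in h2. lra.
Qed.

Lemma count_zeros (G : R -> R) : continuity G -> (forall a b, a < b -> G a < G b) -> G 0 = 0 ->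
  forall N r, 0 <= r -> INR N * PI <= G r < (INR N + 1) * PI ->
  exists l, NoDup l /\ length l = N /\ forall x, In x l <-> (0 < x <= r /\ sin (G x) = 0).
Proof.
  intros hc hm h0.
  assert (hle : forall a b, G a < G b -> a < b).
  { intros a b h. destruct (Rlt_le_dec a b); auto. destruct (Req_dec a b); subst; [lra|].
    pose proof (hm b a ltac:(lra)). lra. }
  pose proof PI_RGT_0 as hpi.
  induction N; intros r hr hb.
  - exists nil. simpl in *. repeat split; try constructor; try tauto.
    intros [[hx1 hx2] hs]. apply (sin_nz_between_nat (G x) 0); auto.
    simpl. split. rewrite Rmult_0_l, <- h0. apply hm; lra.
    destruct (Req_dec x r); subst; [lra|]. pose proof (hm x r ltac:(lra)). lra.
  - rewrite S_INR in hb.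
    destruct (IVT_gen G 0 r ((INR N + 1) * PI) hc) as [x0 [hx0 hGx0]].
    { rewrite h0, Rmin_left, Rmax_right; pose proof (pos_INR N); nra. }
    rewrite Rmin_left, Rmax_right in hx0 by lra.
    destruct (IVT_gen G 0 x0 ((INR N + /2) * PI) hc) as [r' [hr' hGr']].
    { rewrite h0, hGx0, Rmin_left, Rmax_right; pose proof (pos_INR N); nra. }
    assert (0 < x0) by (apply hle; rewrite h0, hGx0; pose proof (pos_INR N); nra).
    rewrite Rmin_left, Rmax_right in hr' by lra.
    destruct (IHN r' ltac:(lra)) as [l' [hnd [hlen hin]]].
    { rewrite hGr'. nra. }
    assert (r' < x0) by (apply hle; rewrite hGr', hGx0; nra).
    exists (x0 :: l'). split; [|split].
    + constructor; auto. intros hi. apply hin in hi. lra.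
    + simpl; auto.
    + intros x. simpl. rewrite hin. split.
      * intros [<-|[h1 h2]]. split; [lra|]. rewrite hGx0. apply sin_eq_0_1.
        exists (Z.of_nat (S N)). rewrite <- INR_IZR_INZ, S_INR. ring.
        split; auto; lra.
      * intros [[hx1 hx2] hs].
        destruct (Rle_lt_dec x r') as [hle'|hlt]; [right; auto|].
        destruct (Req_dec x x0) as [|hne]; [left; auto|]. exfalso.
        destruct (Rlt_le_dec x x0) as [hlt2|hge].
        -- apply (sin_nz_between_nat (G x) N); auto. split.
           pose proof (hm _ _ hlt). nra. pose proof (hm _ _ hlt2). lra.
        -- apply (sin_nz_between_nat (G x) (S N)); auto. rewrite S_INR. split.
           pose proof (hm x0 x ltac:(lra)). lra.
           destruct (Req_dec x r); subst. lra. pose proof (hm x r ltac:(lra)). lra.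
Qed.

Definition sg (g : R) := if Rlt_dec 1 g then 1 else -1.
Definition GG (g x : R) := sg g * gg g x.

Lemma sg_prop g : 0 < g -> g <> 1 ->
  sg g * (g - 1) = Rabs (g - 1) /\ 0 < sg g * (g^2 - 1) /\ (sg g = 1 \/ sg g = -1).
Proof.
  intros hg hne. unfold sg. destruct (Rlt_dec 1 g).
  - rewrite Rabs_pos_eq by lra. split; [ring|split; [nra|auto]].
  - rewrite Rabs_left by lra. split; [ring|split; [nra|auto]].
Qed.

Lemma GG_deriv g x : 0 < g -> is_derive (GG g) x (sg g * dgg g x).
Proof.
  intros hg. unfold GG. apply (is_derive_scal (gg g) x (sg g) (dgg g x)). apply gg_deriv; auto.
Qed.

Lemma dGG_pos g x : 0 < g -> g <> 1 -> 0 <= sg g * dgg g x /\ (sin (g*x) <> 0 -> 0 < sg g * dgg g x).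
Proof.
  intros hg hne. destruct (sg_prop g hg hne) as [_ [h _]].
  assert (H2 : 0 < g^2 * cos (g*x) ^ 2 + sin (g*x) ^ 2) by (apply den_pos; nra).
  unfold dgg. replace (sg g * ((g ^ 2 - 1) * sin (g * x) ^ 2 / (g ^ 2 * cos (g * x) ^ 2 + sin (g * x) ^ 2)))
    with ((sg g * (g^2 - 1)) * sin (g*x) ^ 2 / (g ^ 2 * cos (g * x) ^ 2 + sin (g * x) ^ 2)) by (field; lra).
  split.
  - apply Rdiv_le_0_compat; auto. apply Rmult_le_pos; [lra|]. nra.
  - intros hs. apply Rdiv_lt_0_compat; auto. apply Rmult_lt_0_compat; auto.
    simpl. rewrite Rmult_1_r. apply Rsqr_pos_lt; auto.
Qed.

Lemma GG_strict g : 0 < g -> g <> 1 -> forall a b, a < b -> GG g a < GG g b.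
Proof.
  intros hg hne. apply (strict_incr (GG g) (fun x => sg g * dgg g x)).
  - intros; apply GG_deriv; auto.
  - intros; apply dGG_pos; auto.
  - intros u v huv. pose proof PI_RGT_0.
    pose proof (base_Int_part (g*u/PI)) as [h1 h2]. set (m := Int_part (g*u/PI)) in *.
    assert (A1 : IZR m * PI <= g*u).
    { replace (g*u) with (g*u/PI*PI) by (field; lra). apply Rmult_le_compat_r; lra. }
    assert (A2 : g*u < (IZR m + 1) * PI).
    { replace (g*u) with (g*u/PI*PI) by (field; lra). apply Rmult_lt_compat_r; lra. }
    assert (A3 : u < (IZR m + 1) * PI / g).
    { apply (Rmult_lt_reg_l g); auto. replace (g * ((IZR m + 1) * PI / g)) with ((IZR m + 1) * PI) by (field; lra). auto. }
    exists u, (Rmin v ((IZR m + 1) * PI / g)). split; [split|split].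
    + lra.
    + apply Rmin_glb_lt; auto.
    + apply Rmin_l.
    + intros x [hx1 hx2]. apply dGG_pos; auto. apply (sin_nz_between _ m).
      pose proof (Rmin_r v ((IZR m + 1) * PI / g)).
      assert (x < (IZR m + 1) * PI / g) by lra.
      split. nra.
      apply (Rmult_lt_reg_l (/g)). apply Rinv_0_lt_compat; lra.
      replace (/g * (g * x)) with x by (field; lra).
      replace (/g * ((IZR m + 1) * PI)) with ((IZR m + 1) * PI / g) by (field; lra). auto.
Qed.

Lemma GG_cont g : 0 < g -> continuity (GG g).
Proof.
  intros hg x. apply derivable_continuous_pt. exists (sg g * dgg g x).
  apply is_derive_Reals, GG_deriv; auto.
Qed.

Lemma GG_0 g : GG g 0 = 0.
Proof. unfold GG, gg, qf. rewrite Rmult_0_r, sin_0. unfold Rdiv. rewrite Rmult_0_r, !Rmult_0_l, atan_0. ring. Qed.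

Lemma GG_zero g x : 0 < g -> g <> 1 -> (sin (GG g x) = 0 <-> F_ITE g x = 0).
Proof.
  intros hg hne. unfold GG. destruct (sg_prop g hg hne) as [_ [_ hs]].
  assert (sin (sg g * gg g x) = sg g * sin (gg g x)) as E.
  { destruct hs as [-> | ->]. rewrite !Rmult_1_l; auto. replace (-1 * gg g x) with (- gg g x) by ring. rewrite sin_neg. ring. }
  rewrite E, sin_gg by auto.
  pose proof (den_pos g (g*x) hg). pose proof (cos_atan_pos (qf g (g*x))).
  split; intros h.
  - apply Rmult_integral in h. destruct h as [h|h]. destruct hs; lra.
    unfold Rdiv in h. apply Rmult_integral in h. destruct h as [h|h].
    + apply Rmult_integral in h. destruct h as [h|h]; auto. lra.
    + exfalso. apply (Rinv_neq_0_compat (den g (g*x))); auto. lra.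
  - rewrite h. unfold Rdiv. ring.
Qed.

Lemma GG_bound g x : 0 < g -> g <> 1 -> Rabs (GG g x - Rabs (g - 1) * x) < PI / 2.
Proof.
  intros hg hne. destruct (sg_prop g hg hne) as [h1 [_ hs]].
  unfold GG, gg. rewrite <- h1. pose proof (atan_bound (qf g (g*x))).
  destruct hs as [-> | ->]; apply Rabs_def1; lra.
Qed.

Definition Qz (g : R) (n : nat) := exists z : Z, g * INR n = IZR z.

Lemma Qz_sin g n : Qz g n <-> sin (g * INR n * PI) = 0.
Proof.
  pose proof PI_RGT_0. split.
  - intros [z hz]. apply sin_eq_0_1. exists z. rewrite hz. auto.
  - intros h. destruct (sin_eq_0_0 _ h) as [k hk]. exists k.
    apply (Rmult_eq_reg_r PI); auto. lra.
Qed.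

Lemma min_nat (Q : nat -> Prop) : (exists n, Q n) -> exists m, Q m /\ forall k, Q k -> (m <= k)%nat.
Proof.
  intros [n hn]. apply NNPP. intros H.
  assert (forall n k, (k <= n)%nat -> ~ Q k).
  { induction n0; intros k hk hq.
    - apply H. exists k. split; auto. intros; lia.
    - destruct (Nat.le_gt_cases k n0). apply (IHn0 k); auto.
      apply H. exists k. split; auto. intros k' hk'. apply NNPP. intros hn'.
      apply (IHn0 k'); auto. lia. }
  apply (H0 n n); auto.
Qed.

Lemma Qz_sub g a b j c : Qz g a -> Qz g b -> b = (j * a + c)%nat -> Qz g c.
Proof.
  intros [za ha] [zb hb] e. exists (zb - Z.of_nat j * za)%Z.
  rewrite minus_IZR, mult_IZR, <- INR_IZR_INZ, <- ha, <- hb, e, plus_INR, mult_INR. ring.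
Qed.

Lemma Qz_mul g q j : Qz g q -> Qz g (j * q).
Proof.
  intros [z h]. exists (Z.of_nat j * z)%Z. rewrite mult_IZR, <- INR_IZR_INZ, <- h, mult_INR. ring.
Qed.

Lemma Qz_div g q : (1 <= q)%nat -> Qz g q -> (forall k, (1 <= k)%nat -> Qz g k -> (q <= k)%nat) ->
  forall n, Qz g n <-> exists j, n = (j * q)%nat.
Proof.
  intros hq hQ hmin n. split.
  - intros hn. exists (n / q)%nat.
    pose proof (Nat.div_mod n q ltac:(lia)). pose proof (Nat.mod_upper_bound n q ltac:(lia)).
    assert (Qz g (n mod q)). { apply (Qz_sub g q n (n / q)); auto. lia. }
    destruct (Nat.eq_dec (n mod q) 0). lia.
    pose proof (hmin (n mod q) ltac:(lia) H1). lia.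
  - intros [j ->]. apply Qz_mul; auto.
Qed.

Lemma cos_sq1 y : sin y = 0 -> cos y <> 0.
Proof. intros h hc. pose proof (sin2_cos2 y). unfold Rsqr in H. rewrite h, hc in H. lra. Qed.

Lemma comm_zero g x : 0 < g ->
  (0 < x /\ F_ITE g x = 0 /\ sin x = 0) <-> exists n, (1 <= n)%nat /\ x = INR n * PI /\ Qz g n.
Proof.
  intros hg. pose proof PI_RGT_0. split.
  - intros [hx [hF hs]]. destruct (sin_eq_0_0 _ hs) as [k hk].
    assert (0 < k)%Z. { apply lt_IZR. apply (Rmult_lt_reg_r PI); auto. lra. }
    exists (Z.to_nat k). assert (E : INR (Z.to_nat k) = IZR k) by (rewrite INR_IZR_INZ, Z2Nat.id; auto; lia).
    split; [lia|split]. rewrite E; auto.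
    apply Qz_sin. rewrite E, Rmult_assoc, <- hk.
    unfold F_ITE in hF. rewrite hs in hF. pose proof (cos_sq1 _ hs).
    assert (sin (g*x) * cos x = 0) by lra. apply Rmult_integral in H2. destruct H2; auto. tauto.
  - intros [n [hn [-> hq]]]. apply Qz_sin in hq.
    assert (sin (INR n * PI) = 0). { apply sin_eq_0_1. exists (Z.of_nat n). rewrite INR_IZR_INZ; auto. }
    split; [|split; auto].
    + apply Rmult_lt_0_compat; auto. apply lt_0_INR. lia.
    + unfold F_ITE. rewrite H0, <- Rmult_assoc, hq. ring.
Qed.

Lemma comm_noP g r x : 0 < g -> ~ (exists n, (1 <= n)%nat /\ Qz g n) ->
  ~ (0 < x <= r /\ F_ITE g x = 0 /\ sin x = 0).
Proof.
  intros hg hP [[h1 h2] [h3 h4]]. destruct (proj1 (comm_zero g x hg) (conj h1 (conj h3 h4))) as [n [a [b c]]].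
  apply hP. eauto.
Qed.

Lemma comm_P g q r J : 0 < g -> (1 <= q)%nat -> Qz g q ->
  (forall k, (1 <= k)%nat -> Qz g k -> (q <= k)%nat) ->
  INR J * (INR q * PI) <= r < (INR J + 1) * (INR q * PI) ->
  exists s, NoDup s /\ length s = J /\
    forall x, In x s <-> (0 < x <= r /\ F_ITE g x = 0 /\ sin x = 0).
Proof.
  intros hg hq hQ hmin [hJ1 hJ2]. pose proof PI_RGT_0.
  assert (hqp : 0 < INR q) by (apply lt_0_INR; lia).
  exists (map (fun j => INR (S j * q) * PI) (seq 0 J)). split; [|split].
  - apply NoDup_map_NoDup_ForallPairs; [|apply seq_NoDup].
    intros a b _ _ e. apply Rmult_eq_reg_r in e; [|lra]. apply INR_eq in e. nia.
  - rewrite length_map, length_seq. auto.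
  - intros x. rewrite in_map_iff. split.
    + intros [j [<- hj]]. apply in_seq in hj.
      assert (0 < INR (S j * q) * PI <= r).
      { split. apply Rmult_lt_0_compat; auto. apply lt_0_INR; lia.
        rewrite mult_INR, S_INR. assert (INR j + 1 <= INR J).
        { rewrite <- S_INR. apply le_INR. lia. } nra. }
      destruct (proj2 (comm_zero g (INR (S j * q) * PI) hg)) as [_ [a b]].
      exists (S j * q)%nat. split. nia. split; auto. apply Qz_mul; auto.
      tauto.
    + intros [[h1 h2] [h3 h4]].
      destruct (proj1 (comm_zero g x hg) (conj h1 (conj h3 h4))) as [n [a [-> c]]].
      destruct (proj1 (Qz_div g q hq hQ hmin n) c) as [j ->].
      destruct j as [|j]. lia.
      exists j. split; auto. apply in_seq. split. lia.
      assert (INR (S j) < INR J + 1).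
      { apply (Rmult_lt_reg_r (INR q * PI)). apply Rmult_lt_0_compat; auto.
        rewrite mult_INR in h2. lra. }
      rewrite <- S_INR in H0. apply INR_lt in H0. lia.
Qed.

Lemma c_noP g : 0 < g -> g <> 1 -> ~ (exists n, (1 <= n)%nat /\ Qz g n) ->
  Rabs (g - 1) <= 1 + g /\ (Rabs (g - 1) = 1 + g <->
       ((exists m : Z, g = IZR m) \/ (exists m : Z, / g = IZR m))).
Proof.
  intros hg hne hP. assert (Rabs (g - 1) < 1 + g) by (apply Rabs_def1; lra).
  split; [lra|split; [lra|]].
  intros [[m hm]|[m hm]]; exfalso; apply hP.
  - exists 1%nat. split; auto. exists m. simpl. lra.
  - assert (0 < m)%Z. { apply lt_IZR. rewrite <- hm. apply Rinv_0_lt_compat; auto. }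
    exists (Z.to_nat m). split. lia. exists 1%Z.
    rewrite INR_IZR_INZ, Z2Nat.id by lia. rewrite <- hm. field. lra.
Qed.

Lemma c_P g q : 0 < g -> g <> 1 -> (1 <= q)%nat -> Qz g q ->
  (forall k, (1 <= k)%nat -> Qz g k -> (q <= k)%nat) ->
  Rabs (g - 1) + 2 / INR q <= 1 + g /\ (Rabs (g - 1) + 2 / INR q = 1 + g <->
       ((exists m : Z, g = IZR m) \/ (exists m : Z, / g = IZR m))).
Proof.
  intros hg hne hq [z hz] hmin.
  assert (hq1 : 1 <= INR q) by (replace 1 with (INR 1) by auto; apply le_INR; auto).
  assert (0 < z)%Z. { apply lt_IZR. rewrite <- hz. nra. }
  assert (hz1 : 1 <= IZR z) by (apply IZR_le; lia).
  split; [|split].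
  - destruct (Rlt_le_dec 1 g).
    + rewrite Rabs_pos_eq by lra. assert (2 / INR q <= 2).
      { apply (Rmult_le_reg_r (INR q)). lra. unfold Rdiv. rewrite Rmult_assoc, Rinv_l by lra. nra. } lra.
    + rewrite Rabs_left1 by lra. assert (2 / INR q <= 2 * g).
      { apply (Rmult_le_reg_r (INR q)). lra. unfold Rdiv. rewrite Rmult_assoc, Rinv_l by lra. nra. } lra.
  - intros hc. destruct (Rlt_le_dec 1 g).
    + rewrite Rabs_pos_eq in hc by lra. left. exists z. rewrite <- hz.
      assert (2 / INR q = 2) by lra.
      assert (INR q = 1). { assert (INR q * (2 / INR q) = 2) by (field; lra).
        rewrite H0 in H1. lra. }
      rewrite H1. ring.
    + rewrite Rabs_left1 in hc by lra. right. exists (Z.of_nat q). rewrite <- INR_IZR_INZ.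
      assert (g = / INR q). { assert (2 / INR q = 2 * / INR q) by (unfold Rdiv; ring). lra. }
      rewrite H0, Rinv_inv. auto.
  - intros [[m hm]|[m hm]].
    + assert (H0 : (1 < m)%Z). { assert (0 < m)%Z by (apply lt_IZR; lra).
        destruct (Z.eq_dec m 1); [subst; simpl in hne; lra| lia]. }
      pose proof (IZR_lt _ _ H0) as H0'. assert (q = 1%nat).
      { assert (q <= 1)%nat. apply hmin; auto. exists m. simpl; lra. lia. }
      subst q. simpl. rewrite Rabs_pos_eq by lra. field.
    + assert (hm0 : 0 < IZR m) by (rewrite <- hm; apply Rinv_0_lt_compat; auto).
      assert (H0 : (1 < m)%Z). { assert (0 < m)%Z by (apply lt_IZR; lra).
        destruct (Z.eq_dec m 1); [subst; simpl in hm; exfalso; apply hne; rewrite <- (Rinv_inv g), hm; apply Rinv_1| lia]. }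
      pose proof (IZR_lt _ _ H0) as H0'.
      assert (hg' : g = / IZR m) by (rewrite <- hm, Rinv_inv; auto).
      assert (E : INR (Z.to_nat m) = IZR m) by (rewrite INR_IZR_INZ, Z2Nat.id; auto; lia).
      assert (INR q <= IZR m).
      { rewrite <- E. apply le_INR. apply hmin. lia. exists 1%Z. rewrite E, hg'. field. lra. }
      assert (IZR m <= INR q).
      { rewrite hg' in hz. assert (INR q = IZR z * IZR m) by (rewrite <- hz; field; lra). nra. }
      assert (INR q = IZR m) by lra. rewrite H3, hg'. rewrite Rabs_left1.
      field. lra. apply Rle_minus. rewrite <- Rinv_1. apply Rinv_le_contravar; lra.
Qed.

Definition ord (x : R) : nat := if Req_EM_T (sin x) 0 then 3%nat else 1%nat.
Definition isz (x : R) : bool := if Req_EM_T (sin x) 0 then true else false.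

Lemma zero_ord g x : 0 < g -> g <> 1 -> F_ITE g x = 0 -> zero_order (F_ITE g) x (ord x).
Proof.
  intros hg hne hF. assert (h1g : 1 - g^2 <> 0) by (intro; apply hne; nra).
  unfold ord. destruct (Req_EM_T (sin x) 0) as [hs|hs].
  - pose proof (cos_sq1 _ hs) as hc.
    assert (hsg : sin (g*x) = 0).
    { unfold F_ITE in hF. rewrite hs in hF. assert (sin (g*x) * cos x = 0) by lra.
      apply Rmult_integral in H. destruct H; tauto. }
    pose proof (cos_sq1 _ hsg) as hcg.
    apply order3; auto; unfold F1, F2, F3; rewrite hs, hsg.
    + ring.
    + ring.
    + replace ((1 - g ^ 2) * (2 * g * (cos x * cos (g * x)) - (1 + g ^ 2) * (0 * 0)))
        with ((1 - g^2) * (2 * g) * cos x * cos (g*x)) by ring.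
      repeat apply Rmult_integral_contrapositive_currified; auto; lra.
  - apply order1; auto. unfold F1. repeat apply Rmult_integral_contrapositive_currified; auto.
    intros hsg. unfold F_ITE in hF. rewrite hsg in hF. pose proof (cos_sq1 _ hsg).
    assert (g * sin x * cos (g*x) = 0) by lra.
    apply Rmult_integral in H0. destruct H0; auto. apply Rmult_integral in H0. destruct H0; auto. lra.
Qed.

Lemma sum_ord l : list_sum (map ord l) = (length l + 2 * length (filter isz l))%nat.
Proof.
  induction l as [|a l IH]; simpl; auto. rewrite IH. unfold ord, isz.
  destruct (Req_EM_T (sin a) 0); simpl; lia.
Qed.

Lemma F2map (P : R -> nat -> Prop) f l : (forall x, In x l -> P x (f x)) -> Forall2 P l (map f l).
Proof.
  induction l; simpl; intros h; constructor; auto.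
Qed.

Lemma ITE_count_main g r K J : 0 < g -> g <> 1 -> 0 <= r ->
  INR K * PI <= GG g r < (INR K + 1) * PI ->
  (exists s, NoDup s /\ length s = J /\ forall x, In x s <-> (0 < x <= r /\ F_ITE g x = 0 /\ sin x = 0)) ->
  ITE_count g r (K + 2 * J).
Proof.
  intros hg hne hr hK [s [hs [hsl hsi]]].
  destruct (count_zeros (GG g) (GG_cont g hg) (GG_strict g hg hne) (GG_0 g) K r hr hK)
    as [l [hl [hll hli]]].
  assert (hli' : forall x, In x l <-> (0 < x <= r /\ F_ITE g x = 0)).
  { intros x. rewrite hli, GG_zero; tauto. }
  exists l, (map ord l). split; [auto|split; [auto|split]].
  - apply F2map. intros x hx. apply zero_ord; auto. apply hli' in hx; tauto.
  - rewrite sum_ord, hll. f_equal. f_equal. symmetry. rewrite <- hsl.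
    apply Permutation_length. apply NoDup_Permutation.
    + apply NoDup_filter; auto.
    + auto.
    + intros x. rewrite filter_In, hsi, hli'. unfold isz.
      destruct (Req_EM_T (sin x) 0); intuition congruence.
Qed.

Lemma Rabs_le_inv' x a : Rabs x <= a -> - a <= x <= a.
Proof. intros h. pose proof (Rle_abs x). pose proof (Rle_abs (-x)). rewrite Rabs_Ropp in H0. lra. Qed.

Theorem mainTheorem7 (gamma : R) (hpos : 0 < gamma) (hne : gamma <> 1) :
  exists c : R,
    c <= 1 + gamma /\
    (c = 1 + gamma <->
       ((exists m : Z, gamma = IZR m) \/ (exists m : Z, / gamma = IZR m))) /\
    (exists C r0 : R, forall r : R, r0 <= r ->
       exists n : nat, ITE_count gamma r n /\
                       Rabs (INR n - c * r / PI) <= C).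
Proof.
  pose proof PI_RGT_0 as hpi.
  assert (hK : forall r, 0 <= r -> exists K, INR K * PI <= GG gamma r < (INR K + 1) * PI /\
             Rabs (INR K - Rabs (gamma - 1) * r / PI) <= 2).
  { intros r hr. assert (0 <= GG gamma r).
    { rewrite <- (GG_0 gamma). destruct (Req_dec r 0). subst; lra.
      left. apply GG_strict; auto; lra. }
    destruct (floor_nat PI (GG gamma r) hpi H) as [K hK]. exists K. split; auto.
    pose proof (GG_bound gamma r hpos hne) as hb. apply Rabs_def2 in hb.
    set (u := Rabs (gamma - 1) * r / PI).
    assert (Rabs (gamma - 1) * r = u * PI) by (unfold u; field; lra).
    destruct hb, hK; left; apply Rabs_def1; nra. }
  destruct (classic (exists n, (1 <= n)%nat /\ Qz gamma n)) as [hP|hP].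
  - destruct (min_nat (fun n => (1 <= n)%nat /\ Qz gamma n) hP) as [q [[hq1 hq2] hqm]].
    destruct (c_P gamma q hpos hne hq1 hq2 (fun k a b => hqm k (conj a b))) as [c1 c2].
    exists (Rabs (gamma - 1) + 2 / INR q). split; [auto|split; [auto|]].
    assert (hqp : 0 < INR q) by (apply lt_0_INR; lia).
    exists 4, 0. intros r hr.
    destruct (hK r hr) as [K [hK1 hK2]].
    destruct (floor_nat (INR q * PI) r ltac:(nra) hr) as [J hJ].
    exists (K + 2 * J)%nat. split.
    + apply ITE_count_main; auto. apply (comm_P gamma q r J); auto.
    + rewrite plus_INR, mult_INR. simpl INR.
      set (v := r / (INR q * PI)).
      assert (r = v * (INR q * PI)) by (unfold v; field; lra).
      assert (INR J <= v < INR J + 1) by (destruct hJ; split; nra).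
      replace ((Rabs (gamma - 1) + 2 / INR q) * r / PI) with (Rabs (gamma - 1) * r / PI + 2 * v)
        by (unfold v; field; lra).
      apply Rabs_le_inv' in hK2. apply Rabs_le; lra.
  - destruct (c_noP gamma hpos hne hP) as [c1 c2].
    exists (Rabs (gamma - 1)). split; [auto|split; [auto|]].
    exists 2, 0. intros r hr.
    destruct (hK r hr) as [K [hK1 hK2]].
    exists (K + 2 * 0)%nat. split.
    + apply ITE_count_main; auto. exists nil. split; [constructor|split; auto].
      intros x. split; [simpl; tauto|]. intros h. exfalso. apply (comm_noP gamma r x hpos hP h).
    + replace (K + 2 * 0)%nat with K by lia. auto.
Qed.
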